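(* Let $n,m$ be positive integers, let $S\subseteq S_n$ be a subset of the symmetric group containing the identity, and let $G\le S_n$ be the subgroup generated by $S$. The player can win the $(S,m)$-game if and only if $|G|=1$, or $m=1$, or $(|G|,m)=(p^a,p^b)$ for some prime $p$ and positive integers $a,b$.
   Context: The $(S,m)$-game: $n$ counters sit at positions $1,\dots,n$ (labels fixed from the player's perspective), each showing an element of $\mathbb{Z}_m$, so a configuration is a vector in $\mathbb{Z}_m^n$. The initial configuration is arbitrary and unknown to the player. Each turn the player chooses a move $y\in\mathbb{Z}_m^n$, added coordinatewise to the configuration; then an arbitrary, adversarially chosen permutation $\sigma\in S$ (possibly different each turn) is applied to the counters: the configuration $x$ is replaced by $x'$ with $x'_{\sigma(i)}=x_i$ for all $i$. The player wins if at some moment (including initially) all counters show $0$. A strategy is a finite sequence of moves $y_1,\dots,y_N$ (the player receives no information); it is winning if for every initial configuration and every choice of permutations the configuration equals the zero vector at some time. ''The player can win'' means a winning finite sequence exists. *)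

(* Defs.v *)
From mathcomp Require Import all_boot all_order all_fingroup.
Set Implicit Arguments. Unset Strict Implicit. Unset Printing Implicit Defensive.
Import GroupScope.

(* Elements of Z_m are represented by natural numbers, read modulo m.
   A configuration / move is a function 'I_n -> nat (counter values mod m). *)

Definition config (n : nat) := 'I_n -> nat.

(* One turn: add the move y coordinatewise, then apply sigma to the counters:
   x'_{sigma i} = x_i, i.e. x'_j = x_{sigma^-1 j}. Values reduced mod m. *)
Definition step (n m : nat) (sigma : {perm 'I_n}) (y x : config n) : config n :=
  fun j => (x (sigma^-1 j) + y (sigma^-1 j)) %% m.

Fixpoint conf (n m : nat) (x0 : config n) (ys : seq (config n))
    (sig : nat -> {perm 'I_n}) (k : nat) : config n :=
  match k with
  | 0 => x0
  | k'.+1 => step m (sig k') (nth (fun _ => 0) ys k') (conf m x0 ys sig k')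
  end.

Definition is_zero_conf (n m : nat) (x : config n) : Prop :=
  forall i, x i %% m = 0.

Definition winning (n m : nat) (S : {set {perm 'I_n}}) (ys : seq (config n)) : Prop :=
  forall (x0 : config n) (sig : nat -> {perm 'I_n}),
    (forall k, sig k \in S) ->
    exists k, k <= size ys /\ is_zero_conf m (conf m x0 ys sig k).

Definition player_can_win (n m : nat) (S : {set {perm 'I_n}}) : Prop :=
  exists ys : seq (config n), winning m S ys.

(* Main.v *)
Require Import Defs.
From mathcomp Require Import all_boot all_order all_fingroup all_algebra all_solvable.
From mathcomp Require Import ring.
Set Implicit Arguments. Unset Strict Implicit. Unset Printing Implicit Defensive.
Import GRing.Theory.

Lemma subrBB (T : zmodType) (a b c d : T) : ((a - b) - (c - d) = (a - c) - (b - d))%R.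
Proof. by rewrite !opprB !addrA addrAC [in RHS]addrAC -[in RHS](addrAC a) . Qed.

Section Setup.
Variables (n k : nat).
Local Notation R := 'I_k.+2.
Local Notation V := {ffun 'I_n -> R}.
Local Open Scope group_scope.
Local Open Scope ring_scope.

Definition act (x : V) (g : {perm 'I_n}) : V := [ffun j => x (g^-1%g j)].

Lemma act1 : act^~ 1%g =1 id.
Proof. by move=> x; apply/ffunP=> j; rewrite ffunE invg1 perm1. Qed.

Lemma actM x : act_morph act x.
Proof. by move=> g h; apply/ffunP=> j; rewrite !ffunE invMg permM. Qed.

Definition toA := TotalAction act1 actM.

Lemma actD x y g : act (x + y) g = act x g + act y g.
Proof. by apply/ffunP=> j; rewrite !ffunE. Qed.
Lemma act0 g : act 0 g = 0.
Proof. by apply/ffunP=> j; rewrite !ffunE. Qed.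
Lemma actN x g : act (- x) g = - act x g.
Proof. by apply/ffunP=> j; rewrite !ffunE. Qed.
Lemma actB x y g : act (x - y) g = act x g - act y g.
Proof. by rewrite actD actN. Qed.
Lemma actMn x g i : act (x *+ i) g = act x g *+ i.
Proof. by apply/ffunP=> j; rewrite !ffunE !ffunMnE ffunE. Qed.

Variable S : {set {perm 'I_n}}.
Local Notation G := (<<S>>%g).

Definition Mstep (M : {set V}) := [set x | [forall g in G, act x g - x \in M]].
Arguments Mstep : simpl never.
Fixpoint Mk (i : nat) : {set V} :=
  match i with
  | 0 => [set (0:V)]
  | i'.+1 => Mstep (Mk i')
  end.

Lemma MkSP i x : reflect (forall g, g \in G -> act x g - x \in Mk i) (x \in Mk i.+1).
Proof. by rewrite /= /Mstep inE; apply: (iffP forall_inP). Qed.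

Lemma Mk_sub i : (0 \in Mk i) /\ (forall x y, x \in Mk i -> y \in Mk i -> x - y \in Mk i).
Proof.
elim: i => [|i [IH0 IHB]].
  split; first by rewrite inE.
  by move=> x y; rewrite !inE => /eqP-> /eqP->; rewrite subrr.
split.
  by apply/MkSP=> g _; rewrite act0 subrr.
move=> x y /MkSP Hx /MkSP Hy; apply/MkSP=> g Gg.
suff ->: act (x - y) g - (x - y) = (act x g - x) - (act y g - y) by apply: IHB; [apply: Hx|apply: Hy].
by rewrite actB subrBB.
Qed.

Lemma Mk0 i : 0 \in Mk i. Proof. by case: (Mk_sub i). Qed.
Lemma MkB i x y : x \in Mk i -> y \in Mk i -> x - y \in Mk i.
Proof. by case: (Mk_sub i) => _; apply. Qed.
Lemma MkN i x : x \in Mk i -> - x \in Mk i.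
Proof. by move=> Hx; rewrite -sub0r MkB ?Mk0. Qed.
Lemma MkD i x y : x \in Mk i -> y \in Mk i -> x + y \in Mk i.
Proof. by move=> Hx Hy; rewrite -[y]opprK MkB ?MkN. Qed.

Lemma Mk_act i x g : g \in G -> x \in Mk i -> act x g \in Mk i.
Proof.
elim: i x => [|i IH] x Gg.
  by rewrite !inE => /eqP->; rewrite act0.
move=> /MkSP Hx; apply/MkSP=> h Gh.
suff ->: act (act x g) h - act x g = (act x (g * h)%g - x) - (act x g - x).
  by apply: MkB; apply: Hx; rewrite ?groupM.
by rewrite actM opprB addrA subrK.
Qed.

Lemma Mk_step i x g : g \in G -> x \in Mk i.+1 -> act x g - x \in Mk i.
Proof. by move=> Gg /MkSP; apply. Qed.

Lemma Mk_mono i : Mk i \subset Mk i.+1.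
Proof.
elim: i => [|i IH]; apply/subsetP=> x.
  by rewrite inE => /eqP->; apply: Mk0.
move=> /MkSP Hx; apply/MkSP=> g Gg; exact: (subsetP IH _ (Hx g Gg)).
Qed.

Lemma Mk_le i j : (i <= j)%N -> Mk i \subset Mk j.
Proof.
move=> /subnKC <-; elim: (j - i)%N => [|d IH]; first by rewrite addn0.
by rewrite addnS (subset_trans IH (Mk_mono _)).
Qed.

Lemma Mk_eqS i : Mk i = Mk i.+1 -> Mk i.+1 = Mk i.+2.
Proof.
move=> E; apply/setP=> x; apply/MkSP/MkSP=> H g Gg.
  by rewrite -E; apply: H.
by rewrite E; apply: H.
Qed.

Definition KK := #|V|.
Definition NN := Mk KK.

Lemma NN_stable : Mk KK.+1 = NN.
Proof.
rewrite /NN; suff: (Mk KK == Mk KK.+1) || (KK < #|Mk KK|)%N.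
  case/orP=> [/eqP -> //|]; by rewrite ltnNge max_card.
elim: KK => [|i]; first by rewrite orbC cards1.
have [E0|NE0] := eqVneq (Mk i) (Mk i.+1).
  by move=> _; apply/orP; left; apply/eqP; apply: Mk_eqS.
rewrite /= => Hi; apply/orP; right; apply: (leq_ltn_trans Hi).
by rewrite proper_card // properEneq NE0 Mk_mono.
Qed.

Definition stepV (g : {perm 'I_n}) (y x : V) : V := act (x + y) g.
Fixpoint confV (x0 : V) (ys : seq V) (sig : nat -> {perm 'I_n}) (t : nat) : V :=
  match t with
  | 0 => x0
  | t'.+1 => stepV (sig t') (nth 0 ys t') (confV x0 ys sig t')
  end.

Lemma confV_ext x ys sig sig' t : (forall j, sig j = sig' j) -> confV x ys sig t = confV x ys sig' t.
Proof. by move=> E; elim: t => //= t ->; rewrite E. Qed.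

Lemma confV_pre x a b sig t : (t <= size a)%N -> confV x (a ++ b) sig t = confV x a sig t.
Proof.
elim: t => [//|t IH] Ht /=.
by rewrite IH ?(ltnW Ht) // nth_cat Ht.
Qed.

Lemma confV_cat x a b sig t :
  confV x (a ++ b) sig (size a + t) =
  confV (confV x a sig (size a)) b (fun i => sig (size a + i)%N) t.
Proof.
elim: t => [|t IH]; first by rewrite addn0 confV_pre.
by rewrite addnS /= IH nth_cat ltnNge leq_addr /= addKn.
Qed.

Lemma nth_mem (M : {set V}) zs t : 0 \in M -> all (mem M) zs -> nth 0 zs t \in M.
Proof.
move=> M0 /allP H; have [lt|ge] := ltnP t (size zs); first exact/H/mem_nth.
by rewrite nth_default.
Qed.

Hypothesis S_G : forall g, g \in S -> g \in G.

Lemma drift i x zs sig : (forall t, sig t \in S) -> all (mem (Mk i)) zs -> x \in Mk i.+1 ->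
  forall t, confV x zs sig t \in Mk i.+1 /\ confV x zs sig t - x \in Mk i.
Proof.
move=> Hs Hz Hx; elim=> [|t [IH1 IH2]]; first by rewrite /= subrr Mk0.
rewrite [confV _ _ _ t.+1]/=.
have Hy : nth 0 zs t \in Mk i by apply: nth_mem; rewrite ?Mk0.
have Hy1 : nth 0 zs t \in Mk i.+1 by apply: (subsetP (Mk_mono i)).
have Hw : confV x zs sig t + nth 0 zs t \in Mk i.+1 by apply: MkD.
split; first by apply: Mk_act; rewrite ?S_G.
have -> : stepV (sig t) (nth 0 zs t) (confV x zs sig t) - x =
  (act (confV x zs sig t + nth 0 zs t) (sig t) - (confV x zs sig t + nth 0 zs t))
  + (confV x zs sig t - x) + nth 0 zs t.
  by rewrite /stepV; apply/ffunP => j; rewrite !ffunE; ring.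
apply: MkD; [apply: MkD|] => //; apply: Mk_step => //; exact: S_G.
Qed.

Fixpoint fblk (s : seq V) (prev : V) (cs : seq V) : seq V :=
  match cs with
  | [::] => [::]
  | c :: cs' => (prev - c) :: s ++ fblk s c cs'
  end.

Definition wins (M : {set V}) (ys : seq V) :=
  forall x0, x0 \in M -> forall sig, (forall t, sig t \in S) ->
    exists2 t, (t <= size ys)%N & confV x0 ys sig t = 0.

Lemma fblk_ok i s : all (mem (Mk i)) s -> wins (Mk i) s ->
  forall cs prev x sig x0, all (mem (Mk i.+1)) cs -> prev \in Mk i.+1 -> x \in Mk i.+1 ->
  x0 \in cs -> x + prev - x0 \in Mk i -> (forall t, sig t \in S) ->
  exists2 t, (t <= size (fblk s prev cs))%N & confV x (fblk s prev cs) sig t = 0.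
Proof.
move=> Hs Ws; elim=> [//|c cs IH] prev x sig x0 /andP[Hc Hcs] Hp Hx Hx0 Hd Hsig.
set x1 := act (x + (prev - c)) (sig 0%N).
have Hw : x + (prev - c) \in Mk i.+1 by rewrite MkD ?MkB.
have Hx1a : x1 - (x + (prev - c)) \in Mk i by rewrite Mk_step ?S_G.
have Hx1 : x1 \in Mk i.+1 by apply: Mk_act; rewrite ?S_G.
have Ecat : forall t, confV x (fblk s prev (c :: cs)) sig (1 + t) =
    confV x1 (s ++ fblk s c cs) (fun j => sig (1 + j)%N) t.
  move=> t; rewrite -[fblk _ _ _]/([:: prev - c] ++ (s ++ fblk s c cs)) (confV_cat x [:: prev - c]) //.
have Hsig1 : forall t, sig (1 + t)%N \in S by move=> t; apply: Hsig.
have [Ec|Nc] := eqVneq c x0.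
  have Hin : x1 \in Mk i.
    have -> : x1 = (x1 - (x + (prev - c))) + (x + prev - x0).
      by rewrite Ec; apply/ffunP => j; rewrite !ffunE; ring.
    by rewrite MkD.
  have [t Ht Hz] := Ws x1 Hin _ Hsig1.
  exists (1 + t)%N; first by rewrite /= add1n ltnS size_cat (leq_trans Ht (leq_addr _ _)).
  by rewrite Ecat confV_pre.
have Hx0' : x0 \in cs by move: Hx0; rewrite inE eq_sym (negbTE Nc).
set x2 := confV x1 s (fun j => sig (1 + j)%N) (size s).
have [Hx2 Hx2a] := drift Hsig1 Hs Hx1 (size s).
have Hd2 : x2 + c - x0 \in Mk i.
  have -> : x2 + c - x0 = (x2 - x1) + (x1 - (x + (prev - c))) + (x + prev - x0).
    by apply/ffunP => j; rewrite !ffunE; ring.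
  by apply: MkD; [apply: MkD|].
have Hsig2 : forall t, sig (1 + size s + t)%N \in S by move=> t; apply: Hsig.
have [t Ht Hz] := IH c x2 (fun j => sig (1 + size s + j)%N) x0 Hcs Hc Hx2 Hx0' Hd2 Hsig2.
exists (1 + (size s + t))%N.
  by rewrite /= add1n ltnS size_cat leq_add2l.
rewrite Ecat confV_cat.
rewrite -/x2 -Hz; apply: confV_ext => j; by rewrite addnA.
Qed.

Lemma fblk_all i s prev cs : all (mem (Mk i)) s -> prev \in Mk i.+1 -> all (mem (Mk i.+1)) cs ->
  all (mem (Mk i.+1)) (fblk s prev cs).
Proof.
move=> Hs; elim: cs prev => [//|c cs IH] prev Hp /andP[Hc Hcs] /=.
rewrite -[Mstep (Mk i)]/(Mk i.+1) MkB // all_cat IH // andbT /=.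
by apply/allP=> y /(allP Hs) Hy; apply: (subsetP (Mk_mono i)).
Qed.

Lemma strat i : exists2 ys, all (mem (Mk i)) ys & wins (Mk i) ys.
Proof.
elim: i => [|i [s Hs Ws]].
  exists [::] => // x0; rewrite inE => /eqP -> sig _; by exists 0%N.
exists (fblk s 0 (enum (Mk i.+1))).
  by apply: fblk_all; rewrite ?Mk0 //; apply/allP=> y; rewrite mem_enum.
move=> x0 Hx0 sig Hsig.
apply: (fblk_ok (x0 := x0) Hs Ws) => //.
- by apply/allP=> y; rewrite mem_enum.
- exact: Mk0.
- by rewrite mem_enum.
- by rewrite addr0 subrr Mk0.
Qed.

Lemma win_NN : NN = setT -> exists ys, wins setT ys.
Proof.
move=> E; have [ys _ W] := strat KK; exists ys; move: W; rewrite /wins -/NN E //.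
Qed.

Hypothesis S1 : 1%g \in S.

Lemma NN_closed x : x \notin NN -> exists2 g, g \in S & act x g^-1%g - x \notin NN.
Proof.
move=> Hx.
have [g Gg Hg] : exists2 g, g \in G & act x g - x \notin NN.
  have: x \notin Mk KK.+1 by rewrite NN_stable.
  by rewrite /= /Mstep inE => /forall_inPn.
have [/exists_inP //|Hn] := boolP [exists s in S, act x s^-1%g - x \notin NN].
exfalso.
have HS : forall s, s \in S -> act x s^-1%g - x \in NN.
  move=> s Ss; apply/negPn/negP => Hs; move/negP: Hn; apply; apply/exists_inP; by exists s.
pose H := [set h in G | act x h - x \in NN].
have gH : group_set H.
  apply/group_setP; split; first by rewrite inE group1 act1 subrr Mk0.
  move=> a b; rewrite !inE => /andP[Ga Ha] /andP[Gb Hb]; rewrite groupM //=.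
  have -> : act x (a * b)%g - x = act (act x a - x) b + (act x b - x).
    by rewrite actM actB; apply/ffunP => j; rewrite !ffunE; ring.
  by apply: MkD => //; apply: Mk_act.
have GH : G \subset Group gH.
  rewrite gen_subG; apply/subsetP=> s Ss; rewrite -[s]invgK groupV /= inE.
  by rewrite groupV S_G //= HS.
move: Hg; rewrite -[act x g - x \in NN]/(act x g - x \in NN).
by move/subsetP: GH => /(_ g Gg); rewrite inE => /andP[_ ->].
Qed.

Lemma adv_gen : NN != setT -> forall ys, exists x0, exists2 sig, (forall t, sig t \in S) &
  forall t, (t <= size ys)%N -> confV x0 ys sig t \notin NN.
Proof.
move=> NT; elim=> [|y ys [x1 [sig' Hs' Hc']]].
  have [x0 Hx0] : exists x0, x0 \notin NN.
    by move: NT; rewrite -subTset => /subsetPn [x0 _ Hx0]; exists x0.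
  exists x0, (fun _ => 1%g) => // t; rewrite leqn0 => /eqP ->.
  exact: Hx0.
have Hx1 := Hc' 0%N isT.
have [sA SsA Hx0] : exists2 sA, sA \in S & act x1 sA^-1%g - y \notin NN.
  have [s Ss Hs] := NN_closed Hx1.
  have [Hy|Hy] := boolP (x1 - y \in NN); last by exists 1%g; rewrite // invg1 act1.
  exists s => //; apply/negP => Hn; apply/negP: Hs.
  have -> : act x1 s^-1%g - x1 = (act x1 s^-1%g - y) - (x1 - y).
    by apply/ffunP => j; rewrite !ffunE; ring.
  by apply/negPn; apply: (MkB Hn Hy).
exists (act x1 sA^-1%g - y), (fun t => if t is t'.+1 then sig' t' else sA).
  by case.
case=> [_ //|t Ht].
have -> : confV (act x1 sA^-1%g - y) (y :: ys) (fun t => if t is t'.+1 then sig' t' else sA) t.+1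
   = confV x1 ys sig' t.
  rewrite -[y :: ys]/([:: y] ++ ys) (confV_cat _ [:: y] ys _ t) /= /stepV subrK -actM mulVg act1.
  by apply: confV_ext.
exact: Hc'.
Qed.

Definition cst (x : V) : {set V} := [set x + z | z in NN].

Lemma mem_cst x y : (y \in cst x) = (y - x \in NN).
Proof.
apply/imsetP/idP => [[z Hz ->]|H]; first by rewrite addrC addKr.
by exists (y - x) => //; rewrite addrC subrK.
Qed.

Lemma cst_eq x y : (cst x == cst y) = (x - y \in NN).
Proof.
apply/eqP/idP => [E|H].
  by rewrite -mem_cst -E mem_cst subrr Mk0.
apply/setP => z; rewrite !mem_cst; apply/idP/idP => Hz.
  have -> : z - y = (z - x) + (x - y) by rewrite addrA subrK.
  exact: MkD.
have -> : z - x = (z - y) - (x - y) by rewrite opprB addrA subrK.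
exact: MkB.
Qed.

Lemma card_cst x : #|cst x| = #|NN|.
Proof. by rewrite card_imset //; apply: addrI. Qed.

Definition CC := [set cst x | x : V].

Lemma CC_part : partition CC [set: V].
Proof.
have -> : CC = preim_partition cst [set: V].
  rewrite /preim_partition /equivalence_partition /CC.
  have E : forall x, cst x = [set y in [set: V] | cst x == cst y].
    by move=> x; apply/setP => y; rewrite !inE mem_cst -cst_eq eq_sym.
  apply/setP => A; apply/imsetP/imsetP; case=> x _ ->; exists x => //; by rewrite -E.
exact: preim_partitionP.
Qed.

Lemma card_V : #|[set: V]| = (#|CC| * #|NN|)%N.
Proof.
apply: card_uniform_partition CC_part.
by move=> A /imsetP [x _ ->]; apply: card_cst.
Qed.

Lemma setact_cst g x : g \in G -> (toA^*)%act (cst x) g = cst (act x g).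
Proof.
move=> Gg; rewrite /= setactE; apply/setP => y; rewrite mem_cst.
apply/imsetP/idP => [[w Hw ->]|H].
  by rewrite /= -actB; apply: Mk_act; rewrite // -mem_cst.
exists (act y g^-1%g); last by rewrite /= -actM mulVg act1.
rewrite mem_cst.
have -> : act y g^-1%g - x = act (y - act x g) g^-1%g by rewrite actB -actM mulgV act1.
by apply: Mk_act; rewrite ?groupV.
Qed.

Lemma acts_CC : [acts G, on CC | toA^*].
Proof.
apply/actsP => g Gg A; apply/idP/idP => [/imsetP [x _ EA]|/imsetP [x _ ->]].
  have -> : A = (toA^*)%act ((toA^*)%act A g) g^-1%g by rewrite actK.
  by rewrite EA setact_cst ?groupV // imset_f.
by rewrite setact_cst // imset_f.
Qed.

Lemma NN_pgroup p : prime p -> p.-group G -> p.-nat #|[set: V]| -> NN = setT.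
Proof.
move=> pp pG pV; apply/eqP; rewrite -subTset; apply/negPn/negP => /subsetPn [x1 _ Hx1].
have pC : (p %| #|CC|)%N.
  have pnC : p.-nat #|CC| by apply: pnat_dvd pV; rewrite card_V dvdn_mulr.
  have [e He] := p_natP pnC.
  have C1 : (1 < #|CC|)%N.
    rewrite (cardsD1 (cst 0)) imset_f // ltnS; apply/card_gt0P; exists (cst x1).
    by rewrite !inE imset_f // andbT cst_eq subr0.
  rewrite He; move: C1; rewrite He; case: e {He} => [//|e] _.
  by rewrite expnS dvdn_mulr.
have := pgroup_fix_mod pG acts_CC.
rewrite (eqP pC) => /esym /eqP; rewrite -/(dvdn _ _) => pF.
have F0 : cst 0 \in 'Fix_(CC | toA^*)(G).
  rewrite inE imset_f //=; apply/afixP => g Gg; rewrite setact_cst // act0 //.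
have [A HA NA] : exists2 A, A \in 'Fix_(CC | toA^*)(G) & A != cst 0.
  have: (1 < #|'Fix_(CC | toA^*)(G)|)%N.
    apply: leq_trans (prime_gt1 pp) (dvdn_leq _ pF).
    by apply/card_gt0P; exists (cst 0).
  rewrite (cardsD1 (cst 0)) F0 ltnS => /card_gt0P [A]; rewrite in_setD1 => /andP[NA HA].
  by exists A.
move: HA; rewrite inE => /andP [/imsetP [x _ EA] /afixP Hfix]; subst A.
have Hx : x \in Mk KK.+1.
  apply/MkSP => g Gg; have := Hfix g Gg; rewrite setact_cst // => /eqP.
  by rewrite cst_eq.
move: Hx; rewrite NN_stable => Hx.
by move: NA; rewrite cst_eq subr0 Hx.
Qed.

Lemma iterT i x g : g \in G -> x \in Mk i -> iter i (fun v => act v g - v) x = 0.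
Proof.
elim: i x => [|i IH] x Gg; first by rewrite inE => /eqP ->.
by move=> Hx; rewrite iterSr; apply: IH => //; apply: Mk_step.
Qed.

Lemma act_iterfix v h j : act v h = v -> act v (h ^+ j)%g = v.
Proof. by move=> Hv; elim: j => [|j IH]; rewrite ?expg0 ?act1 // expgSr actM IH. Qed.

Lemma sum_telesc v h q : #[h]%g = q ->
  \sum_(0 <= j < q) act (act v h - v) (h ^+ j)%g = 0.
Proof.
move=> Hq.
have -> : \sum_(0 <= j < q) act (act v h - v) (h ^+ j)%g =
  \sum_(0 <= j < q) (act v (h ^+ j.+1)%g - act v (h ^+ j)%g).
  by apply: eq_bigr => j _; rewrite actB -actM expgS.
by rewrite telescope_sumr // -Hq expg_order expg0 subrr.
Qed.

Lemma NN_T_prime : NN = setT -> forall p q, prime p -> (p %| k.+2)%N -> prime q ->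
  (q %| #|G|)%N -> q = p.
Proof.
move=> NT p q pp pm pq qG; apply/eqP; apply/negPn/negP => Nqp.
have [h Gh oh] := Cauchy pq qG.
pose T := fun v => act v h - v.
have [i0 Hi0] : exists i0, h i0 != i0.
  case: (pickP (fun j => h j != j)) => [j Hj|H]; first by exists j.
  have h1 : h = 1%g by apply/permP => j; rewrite perm1; apply/eqP/negPn; rewrite H.
  by move: oh; rewrite h1 order1 => E; move: (prime_gt1 pq); rewrite -E.
pose c : 'I_k.+2 := (k.+2 %/ p)%:R.
have cp : c *+ p = 0.
  by rewrite /c -mulrnA divnK // (@char_Zp k.+2).
have c0 : c != 0.
  have Ec : (nat_of_ord c = (k.+2 %/ p) %% k.+2)%N by apply: (@val_Zp_nat k.+2).
  apply/eqP => E; move: Ec; rewrite E /= modn_small.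
    move=> H; suff : (0 < k.+2 %/ p)%N by rewrite -H.
    by rewrite divn_gt0 ?prime_gt0 // dvdn_leq.
  by rewrite ltn_Pdiv ?prime_gt1.
pose e : V := [ffun j => if j == i0 then c else 0].
have bez : forall v : V, v *+ p = 0 -> v *+ q = 0 -> v = 0.
  move=> v vp vq.
  have [a _ Ha] := @Bezoutl p q (prime_gt0 pp).
  have g1 : gcdn p q = 1%N.
    by apply/eqP; rewrite -/(coprime p q) prime_coprime // dvdn_prime2 // eq_sym.
  move: Ha; rewrite g1 => /dvdnP [d Hd].
  have E : v *+ (1 + a * q) = 0 by rewrite Hd mulnC mulrnA vp mul0rn.
  by rewrite mulrnDr mulr1n mulnC mulrnA vq mul0rn addr0 in E.
have Pstep : forall v : V, v *+ p = 0 -> \sum_(0 <= j < q) act v (h ^+ j)%g = 0 -> v != 0 ->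
   [/\ T v *+ p = 0, \sum_(0 <= j < q) act (T v) (h ^+ j)%g = 0 & T v != 0].
  move=> v vp vs vn; split.
  - by rewrite /T mulrnBl -actMn vp act0 subr0.
  - exact: sum_telesc.
  apply: contra vn; rewrite /T subr_eq0 => /eqP Hv; apply/eqP/bez => //.
  by rewrite -vs (eq_bigr (fun _ => v)) ?sumr_const_nat ?subn0 // => j _; apply: act_iterfix.
have Pu : [/\ T e *+ p = 0, \sum_(0 <= j < q) act (T e) (h ^+ j)%g = 0 & T e != 0].
  split.
  - rewrite /T mulrnBl -actMn.
    have -> : e *+ p = 0 by apply/ffunP => j; rewrite ffunMnE !ffunE; case: ifP; rewrite ?cp ?mul0rn.
    by rewrite act0 subr0.
  - exact: sum_telesc.
  apply/eqP => /ffunP /(_ i0); rewrite !ffunE eqxx.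
  have -> : (h^-1%g i0 == i0) = false.
    apply/negP => /eqP E; move/eqP: Hi0; apply; by rewrite -{1}E permKV.
  by rewrite sub0r => /eqP; rewrite oppr_eq0 (negbTE c0).
have : forall t, [/\ iter t T (T e) *+ p = 0,
   \sum_(0 <= j < q) act (iter t T (T e)) (h ^+ j)%g = 0 & iter t T (T e) != 0].
  elim=> [//|t [IH1 IH2 IH3]]; rewrite iterS; exact: Pstep.
move=> /(_ KK) [_ _]; rewrite -iterSr iterT ?eqxx //.
by rewrite NN_stable NT inE.
Qed.
End Setup.

Section Bridge.
Variables (n k : nat) (S : {set {perm 'I_n}}).
Local Notation V := {ffun 'I_n -> 'I_k.+2}.
Local Open Scope group_scope.
Local Open Scope ring_scope.

Definition vz (x : config n) : V := [ffun j => inZp (x j)].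

Lemma vz_step g y x : vz (step (k.+2) g y x) = stepV g (vz y) (vz x).
Proof.
apply/ffunP => j; rewrite !ffunE; apply: val_inj => /=.
by rewrite !modn_mod modnDm.
Qed.

Lemma vz_conf x0 ys sig t :
  vz (conf (k.+2) x0 ys sig t) = confV (vz x0) (map vz ys) sig t.
Proof.
elim: t => [//|t IH] /=; rewrite vz_step IH; congr stepV.
have [lt|ge] := ltnP t (size ys); first by rewrite (nth_map (fun _ => 0%N)).
rewrite !nth_default ?size_map //.
by apply/ffunP => j; rewrite !ffunE; apply: val_inj.
Qed.

Lemma zero_vz x : is_zero_conf (k.+2) x <-> vz x = 0.
Proof.
split => [H|H].
  by apply/ffunP => j; rewrite !ffunE; apply: val_inj => /=; rewrite H.
move=> i; have := congr1 (fun f : V => nat_of_ord (f i)) H.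
by rewrite /= !ffunE.
Qed.

Definition unvz (v : V) : config n := fun j => nat_of_ord (v j).
Lemma vz_unvz v : vz (unvz v) = v.
Proof. by apply/ffunP => j; rewrite ffunE valZpK. Qed.

Lemma win_iff : 1%g \in S -> player_can_win (k.+2) S <-> NN k S = setT.
Proof.
move=> S1.
have S_G : forall g, g \in S -> g \in <<S>>%g by move=> g; apply: mem_gen.
split.
  case=> ys Wys; apply/eqP; apply/negPn/negP => NT.
  have [x0 [sig Hs Hc]] := adv_gen S_G S1 NT (map vz ys).
  have [t [Ht Hz]] := Wys (unvz x0) sig Hs.
  move/zero_vz: Hz; rewrite vz_conf vz_unvz => Hz.
  by move: (Hc t); rewrite size_map Ht Hz Mk0 => /(_ isT).
move/(win_NN S_G) => [ys W].
exists (map unvz ys) => x0 sig Hs.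
have [t Ht Hz] := W (vz x0) (in_setT _) sig Hs.
exists t; split; first by rewrite size_map.
by apply/zero_vz; rewrite vz_conf -map_comp (eq_map vz_unvz) map_id.
Qed.

End Bridge.

Section Cond.
Local Open Scope group_scope.
Lemma NN_cond n k (S : {set {perm 'I_n}}) : 1%g \in S ->
  NN k S = setT <->
  (#|<<S>>%g| = 1%N \/ exists p a b, [/\ prime p, 0 < a, 0 < b, #|<<S>>%g| = p ^ a & k.+2 = p ^ b]%N).
Proof.
move=> S1.
have S_G : forall g, g \in S -> g \in <<S>>%g by move=> g; apply: mem_gen.
split.
  move=> NT; have [G1|G1] := eqVneq #|<<S>>%g| 1%N; [by left | right].
  have Gpos : (1 < #|<<S>>%g|)%N by rewrite ltn_neqAle eq_sym G1 cardG_gt0.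
  set q := pdiv #|<<S>>%g|; set p := pdiv k.+2.
  have pq : prime q by apply: pdiv_prime.
  have pp : prime p by apply: pdiv_prime.
  have qp : q = p := NN_T_prime NT pp (pdiv_dvd _) pq (pdiv_dvd _).
  have pG : p.-nat #|<<S>>%g|.
    apply/pnatP => [|r pr rG]; first exact: cardG_gt0.
    by rewrite inE (NN_T_prime NT pp (pdiv_dvd _) pr rG).
  have pm : p.-nat k.+2.
    apply/pnatP => [//|r pr rm].
    by rewrite inE -qp (NN_T_prime NT pr rm pq (pdiv_dvd _)).
  have [a Ha] := p_natP pG; have [b Hb] := p_natP pm.
  exists p, a, b; split => //.
    by case: a Ha Gpos => [->|].
  by case: b Hb => [|//] /eqP; rewrite expn0.
case=> [G1|[p [a [b [pp a0 b0 Ga mb]]]]].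
  apply/eqP; rewrite eqEsubset subsetT /=.
  have K1 : (1 <= KK n k)%N by apply/card_gt0P; exists 0%R.
  apply: subset_trans (Mk_le k S K1).
  apply/subsetP => x _; apply/MkSP => g Gg.
  have : (<<S>>%g :==: 1)%g by rewrite trivg_card1 G1.
  move/eqP/trivgP/subsetP/(_ g Gg); rewrite inE => /eqP ->.
  by rewrite act1 subrr inE.
apply: (NN_pgroup pp).
  by rewrite /pgroup Ga pnatX pnat_id.
by rewrite cardsT card_ffun !card_ord mb -expnM pnatX pnat_id.
Qed.
End Cond.

Theorem theorem1p2 (n m : nat) (S : {set {perm 'I_n}}) :
  0 < n -> 0 < m -> (1%g \in S) ->
  player_can_win m S <->
  (#|<<S>>%g| = 1 \/ m = 1 \/
   exists p a b, [/\ prime p, 0 < a, 0 < b, #|<<S>>%g| = p ^ a & m = p ^ b]).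
Proof.
move=> _; case: m => [//|[_ S1|k _ S1]].
  split=> [_|_]; first by right; left.
  by exists [::] => x0 sig _; exists 0; split => // i; rewrite modn1.
rewrite win_iff // NN_cond //; split.
  by case=> [H|H]; [left | right; right].
by case=> [H|[//|H]]; [left | right].
Qed.
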